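(* Let $\{\omega_v:v\in\mathbb{Z}^2\}$ be i.i.d. real random variables with $\bar F(x)=\mathbb{P}(\omega>x)$, let $n\ge1$, $\beta_n>0$, $k_n>0$, and set $\tilde\omega_v=\omega_v\mathds{1}_{\{\omega_v\le k_n\}}$. Let $0=h_0<h_1<\dots<h_\ell$ be integers with $\ell\ge1$ and $h_{\ell-1}<n\le h_\ell$. Then for any real number $A>0$, \[ \mathbb{P}\big(\log Z^{\omega}_{n,\beta_n}-\log Z^{\tilde\omega}_{n,\beta_n}>A\big)\le|\mathbf{B}_1|\cdot\bar F(k_n)+\mathbb{P}\Big(\sum_{j=2}^{\ell}\exp(\beta_nM_j)\,\mathbf{P}^{\tilde\omega}_{n,\beta_n}(\mathcal{B}_{j-1}^c)>A\Big). \]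
   Context: $\mathscr{S}_0^n$ is the set of nearest-neighbour paths $\mathbf{s}=((i,s_i))_{i=0}^n$ with $s_0=0$, $|s_i-s_{i-1}|=1$. For an environment $\{\omega_v\}$ and $\mathcal{A}\subseteq\mathscr{S}_0^n$, $Z^{\omega}_{n,\beta}(\mathcal{A}):=2^{-n}\sum_{\mathbf{s}\in\mathcal{A}}\exp\big(\beta\sum_{i=1}^n\omega_{i,s_i}\big)$ and $Z^{\omega}_{n,\beta}:=Z^{\omega}_{n,\beta}(\mathscr{S}_0^n)$; the polymer measure is $\mathbf{P}^{\omega}_{n,\beta}(\mathcal{A})=Z^{\omega}_{n,\beta}(\mathcal{A})/Z^{\omega}_{n,\beta}$. For $j=1,\dots,\ell$: $\mathbf{B}_j=([0,n]\times(-h_j,h_j))\cap\mathbb{Z}^2$ with cardinality $|\mathbf{B}_j|$; $\mathcal{B}_j=\{\mathbf{s}\in\mathscr{S}_0^n:\max_{1\le i\le n}|s_i|<h_j\}$ and $\mathcal{B}_j^c=\mathscr{S}_0^n\setminus\mathcal{B}_j$; $M_j=\sum_{v\in\mathbf{B}_j}\omega_v\mathds{1}_{\{\omega_v>k_n\}}$. *)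

(* Defs.v *)
From HB Require Import structures.
From mathcomp Require Import all_boot all_order all_algebra.
From mathcomp Require Import all_classical all_reals all_analysis.
Unset Printing Implicit Defensive.
Import Order.TTheory GRing.Theory Num.Theory.
Local Open Scope classical_set_scope.
Local Open Scope ring_scope.

(* Sites of Z^2 are pairs of integers (time, height). *)
Definition site := (int * int)%type.

(* A path in S_0^n is encoded bijectively by its n steps: st k = true means
   s_{k+1} - s_k = +1, false means -1.  s_0 = 0. *)
Definition steps (n : nat) := {ffun 'I_n -> bool}.

Definition pos (n : nat) (st : steps n) (i : nat) : int :=
  \sum_(k < n | (k < i)%N) (if st k then 1 else -1).

Definition Zpart {R : realType} (n : nat) (beta : R) (om : site -> R)
  (A : pred (steps n)) : R :=
  ((2 : R) ^+ n)^-1 * \sum_(st : steps n | A st)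
     expR (beta * \sum_(i < n) om ((i.+1)%:Z, pos n st i.+1)).

Definition Zfull {R : realType} (n : nat) (beta : R) (om : site -> R) : R :=
  Zpart n beta om predT.

Definition polymer {R : realType} (n : nat) (beta : R) (om : site -> R)
  (A : pred (steps n)) : R :=
  Zpart n beta om A / Zfull n beta om.

Definition inBox (n h : nat) : pred (steps n) :=
  fun st => [forall i : 'I_n, `|pos n st i.+1| < h%:Z].

Definition outBox (n h : nat) : pred (steps n) :=
  fun st => ~~ inBox n h st.

(* the list of the points of the box ([0,n] x (-h,h)) cap Z^2, without
   repetition (heights -(h-1), ..., h-1) *)
Definition box_pts (n h : nat) : seq site :=
  [seq (i%:Z, k%:Z - (h%:Z - 1)) | i <- iota 0 n.+1, k <- iota 0 (2 * h).-1].

Definition box_card (n h : nat) : nat := size (box_pts n h).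

Definition Mbox {R : realType} (n h : nat) (k : R) (om : site -> R) : R :=
  \sum_(v <- box_pts n h) (if om v > k then om v else 0).

Definition trunc {R : realType} (k : R) (om : site -> R) : site -> R :=
  fun v => if om v <= k then om v else 0.

Definition mutually_independent {d} {T : measurableType d} {R : realType}
  (P : probability T R) (I : eqType) (X : I -> {RV P >-> R}) : Prop :=
  forall (J : seq I) (B : I -> set R), uniq J ->
    (forall i, i \in J -> measurable (B i)) ->
    P (\big[setI/setT]_(i <- J) (X i @^-1` B i)) =
    (\prod_(i <- J) P (X i @^-1` B i))%E.

Definition identically_distributed {d} {T : measurableType d} {R : realType}
  (P : probability T R) (I : Type) (X : I -> {RV P >-> R}) : Prop :=
  forall (i j : I) (B : set R), measurable B ->
    P (X i @^-1` B) = P (X j @^-1` B).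

(* Main.v *)
Require Import Defs.
From HB Require Import structures.
From mathcomp Require Import all_boot all_order all_algebra.
From mathcomp Require Import all_classical all_reals all_analysis.
From mathcomp Require Import measurable_realfun zify.
Import Order.TTheory GRing.Theory Num.Theory.
Local Open Scope classical_set_scope.
Local Open Scope ring_scope.

Lemma pos0 n (st : steps n) : pos n st 0 = 0.
Proof. by rewrite /pos big_pred0. Qed.

Lemma posS_lt n (st : steps n) t (ht : (t < n)%N) :
  pos n st t.+1 = pos n st t + (if st (Ordinal ht) then 1 else -1).
Proof.
rewrite /pos (bigID (fun k : 'I_n => (k < t)%N)) /=.
congr (_ + _).
  apply: eq_bigl => k; apply/andP/idP => [[] //|H]; split => //; exact: ltnW.
rewrite (big_pred1 (Ordinal ht)) // => k /=.
apply/andP/eqP => [[h1 h2]|->] /=.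
  apply: val_inj => /=; move: h1 h2; rewrite -leqNgt; lia.
by rewrite ltnS leqnn ltnn.
Qed.

Lemma posS_ge n (st : steps n) t (ht : (n <= t)%N) :
  pos n st t.+1 = pos n st t.
Proof.
rewrite /pos; apply: eq_bigl => k.
have := ltn_ord k; move=> hk.
have -> : (k < t)%N by apply: leq_trans hk ht.
by rewrite ltnS ltnW // (leq_trans hk ht).
Qed.

Lemma pos_abs n (st : steps n) t : `|pos n st t| <= t%:Z.
Proof.
elim: t => [|t IH]; first by rewrite pos0.
case: (ltnP t n) => ht.
  rewrite (@posS_lt _ st _ ht); case: (st _); lia.
rewrite posS_ge //; lia.
Qed.

Lemma pos_one n (st : steps n) : (1 <= n)%N -> `|pos n st 1| = 1.
Proof. move=> hn; rewrite (@posS_lt _ st _ hn) pos0; case: (st _); lia. Qed.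

Lemma mem_grid (a m h t : nat) (p : int) : (a <= t < a + m)%N -> `|p| < h%:Z ->
  (t%:Z, p) \in [seq (i%:Z, k%:Z - (h%:Z - 1)) | i <- iota a m, k <- iota 0 (2 * h).-1].
Proof.
move=> ht hp; apply/allpairsP; exists (t, absz ((p + h%:Z - 1)%R)).
rewrite /= !mem_iota; split.
- lia.
- rewrite add0n; change ((2 * h)%R) with (2 * h)%N; lia.
- congr pair; lia.
Qed.

Lemma mem_rem_neq (T : eqType) (x y : T) (B : seq T) :
  y != x -> y \in B -> y \in rem x B.
Proof.
elim: B => //= z B IH hyx; rewrite inE; case: ifP => [/eqP zx|zx].
  by case/orP => [/eqP yz|//]; rewrite yz zx eqxx in hyx.
by rewrite inE; case/orP => [->//|yB]; rewrite IH ?orbT.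
Qed.

Lemma sum_le_sub (R : realType) (L B : seq site) (g : site -> R) :
  uniq L -> (forall v, 0 <= g v) -> {subset L <= B} ->
  \sum_(v <- L) g v <= \sum_(v <- B) g v.
Proof.
elim: L B => [|x L IH] B /= uL g0 sLB; first by rewrite big_nil sumr_ge0.
move: uL => /andP [xL uL].
have xB : x \in B by apply: sLB; rewrite inE eqxx.
rewrite (perm_big _ (perm_to_rem xB)) !big_cons lerD2l.
apply: IH => // y yL; apply: mem_rem_neq.
  by apply: contraNneq xL => <-.
by apply: sLB; rewrite inE yL orbT.
Qed.

Lemma sum_le_box (R : realType) (L B : seq site) (g : site -> R) :
  uniq L -> (forall v, 0 <= g v) -> (forall v, v \in L -> g v != 0 -> v \in B) ->
  \sum_(v <- L) g v <= \sum_(v <- B) g v.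
Proof.
move=> uL g0 hLB.
rewrite (bigID (fun v => g v != 0)) /= [X in _ + X]big1 ?addr0; last first.
  by move=> v /negbNE /eqP.
rewrite -big_filter; apply: sum_le_sub => //; first exact: filter_uniq.
by move=> v; rewrite mem_filter => /andP [gv vL]; apply: hLB.
Qed.

Lemma le_sum_term (R : realType) m p j (F : nat -> R) : (m <= j < p)%N ->
  (forall i, 0 <= F i) -> F j <= \sum_(m <= i < p) F i.
Proof.
move=> /andP [mj jp] F0.
rewrite (big_cat_nat (n:=j)) //; last exact: ltnW.
rewrite /= [X in _ <= _ + X]big_ltn //.
apply: ler_wpDl; first by apply: sumr_ge0 => i _.
by rewrite lerDl; apply: sumr_ge0 => i _.
Qed.

Lemma pick_j (Pr : nat -> bool) m : (1 <= m)%N -> ~~ Pr 1%N ->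
  exists j, [/\ (1 <= j <= m)%N, ~~ Pr j & (j = m \/ Pr j.+1)].
Proof.
elim: m => // m IH _ hP1.
case: (posnP m) => [->|m0].
  by exists 1%N; split => //; left.
have [j [hj hPj [jm|hPj1]]] := IH m0 hP1.
- case hm: (Pr m.+1).
    exists j; split => //; [lia| by right; rewrite jm].
  exists m.+1; split => //; [lia| by rewrite hm| by left].
- by exists j; split => //; [lia|right].
Qed.


Definition Ulist (n h : nat) : seq site :=
  (n%:Z, n%:Z) :: (n%:Z, - n%:Z) ::
  (if (2 <= h)%N then [seq (i%:Z, k%:Z - (h%:Z - 1)) | i <- iota 1 n, k <- iota 0 (2 * h).-1]
   else [::]).

Lemma memU n h t (p : int) : (1 <= t <= n)%N ->
  ((2 <= h)%N /\ `|p| < h%:Z) \/ (t = n /\ `|p| = n%:Z) -> (t%:Z, p) \in Ulist n h.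
Proof.
move=> ht [[h2 hp]|[-> hp]]; rewrite /Ulist !in_cons.
  by rewrite h2 mem_grid ?orbT //; lia.
have : p = n%:Z \/ p = - n%:Z by lia.
by case => ->; rewrite eqxx ?orbT.
Qed.

Lemma size_U n h : (1 <= n)%N -> (1 <= h)%N -> (size (Ulist n h) <= box_card n h)%N.
Proof.
move=> hn hh; rewrite /Ulist /box_card /box_pts.
rewrite [size (_ :: _)]/=.
case: ifP => h2; rewrite !size_allpairs !size_iota ?size_nil /=;
  have hx : (1 <= (2 * h).-1)%N by lia.
- have hx2 : (2 <= (2 * h).-1)%N by lia.
  move: hx2; set x := (2 * h).-1 => hx2; nia.
- move: hx; set x := (2 * h).-1 => hx; nia.
Qed.

Definition dd {R : realType} (k : R) (om : site -> R) (v : site) : R :=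
  if k < om v then om v else 0.
Definition site_of n (st : steps n) (i : 'I_n) : site := ((i.+1)%:Z, pos n st i.+1).
Arguments site_of {n}.
Definition Dst {R : realType} n (k : R) (om : site -> R) (st : steps n) : R :=
  \sum_(i < n) dd k om (site_of st i).

Lemma dd_ge0 {R : realType} (k : R) om v : 0 < k -> 0 <= dd k om v.
Proof. by move=> hk; rewrite /dd; case: ifP => // /(lt_trans hk) /ltW. Qed.

Lemma D_allU {R : realType} n (k : R) om (st : steps n) (U : seq site) :
  (forall v, v \in U -> om v <= k) -> (forall i, site_of st i \in U) ->
  Dst n k om st = 0.
Proof. by move=> hU hs; apply: big1 => i _; rewrite /dd ltNge hU. Qed.

Lemma D_box {R : realType} n (k : R) om (st : steps n) (U : seq site) hj : 0 < k ->
  (forall v, v \in U -> om v <= k) ->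
  (forall i : 'I_n, site_of st i \in U \/ `|pos n st i.+1| < hj%:Z) ->
  Dst n k om st <= Mbox n hj k om.
Proof.
move=> hk hU hs.
have -> : Dst n k om st = \sum_(v <- [seq site_of st i | i <- index_enum 'I_n]) dd k om v.
  by rewrite big_map.
apply: (@sum_le_box _ _ _ (dd k om)).
- rewrite map_inj_uniq ?index_enum_uniq // => i j [] H _; apply: val_inj; exact: H.
- by move=> v; exact: dd_ge0.
- move=> v /mapP [i _ ->] hv; case: (hs i) => [iU|hp].
    by move: hv; rewrite /dd ltNge hU // eqxx.
  by apply: mem_grid => //; have := ltn_ord i; lia.
Qed.

Lemma path_bound {R : realType} n (beta k : R) l (h : nat -> nat) om (st : steps n) :
  (1 <= n)%N -> 0 < beta -> 0 < k -> (1 <= l)%N -> h 0%N = 0%N ->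
  (forall j, (j < l)%N -> (h j < h j.+1)%N) ->
  (h l.-1 < n)%N -> (n <= h l)%N ->
  (forall v, v \in Ulist n (h 1%N) -> om v <= k) ->
  expR (beta * Dst n k om st) <=
  1 + \sum_(2 <= j < l.+1) expR (beta * Mbox n (h j) k om) * (outBox n (h j.-1) st)%:R.
Proof.
move=> hn hb hk hl h0 hinc hlm hnl hU.
have h1pos : (1 <= h 1%N)%N by have := hinc 0%N hl; rewrite h0.
have pabs i : `|pos n st i| <= i%:Z := pos_abs _ st i.
have sum0 : 0 <= \sum_(2 <= j < l.+1) expR (beta * Mbox n (h j) k om) * (outBox n (h j.-1) st)%:R.
  by apply: sumr_ge0 => j _; rewrite mulr_ge0 // ?ltW ?expR_gt0 // ler0n.
have caseA : (forall i, site_of st i \in Ulist n (h 1%N)) ->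
  expR (beta * Dst n k om st) <=
  1 + \sum_(2 <= j < l.+1) expR (beta * Mbox n (h j) k om) * (outBox n (h j.-1) st)%:R.
  by move=> hs; rewrite (D_allU _ _ _ _ _ hU hs) mulr0 expR0 lerDl.
have caseB : forall j, (2 <= j <= l)%N -> outBox n (h j.-1) st ->
  (forall i : 'I_n, site_of st i \in Ulist n (h 1%N) \/ `|pos n st i.+1| < (h j)%:Z) ->
  expR (beta * Dst n k om st) <=
  1 + \sum_(2 <= j < l.+1) expR (beta * Mbox n (h j) k om) * (outBox n (h j.-1) st)%:R.
  move=> j hj ho hs.
  have hj' : (2 <= j < l.+1)%N by lia.
  apply: (le_trans _ (ler_wpDl ler01 (@le_sum_term _ _ _ _ _ hj' _))); last first.
    by move=> i; rewrite mulr_ge0 // ?ltW ?expR_gt0 // ler0n.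
  rewrite /= ho mulr1 ler_expR ler_pM2l //.
  exact: (D_box _ _ _ _ _ _ hk hU hs).
case Hin: (inBox n (h 1%N) st).
  apply: caseA => i; move: Hin; rewrite /inBox => /forallP Hall.
  have h2 : (2 <= h 1%N)%N.
    by have := Hall (Ordinal hn); rewrite /= pos_one //; lia.
  apply: memU; first by have := ltn_ord i; lia.
  by left; split => //; exact: Hall i.
case: (leqP l 1) => hl1.
  apply: caseA => i; apply: memU; first by have := ltn_ord i; lia.
  have hl' : l = 1%N by lia.
  rewrite hl' in hnl.
  have := ltn_ord i; have := pabs i.+1.
  case: (posnP i) => [i0|ipos].
    by rewrite /site_of i0 pos_one //; lia.
  lia.
have [j [hj hPj hj2]] := @pick_j (fun j => inBox n (h j) st) l.-1 ltac:(lia) ltac:(by rewrite /= Hin).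
apply: (caseB j.+1); first by lia.
  by rewrite /outBox /=.
move=> i; case: hj2 => [jl|hP]; last by right; move: hP => /forallP.
have -> : j.+1 = l by lia.
case: (boolP (`|pos n st i.+1| < (h l)%:Z)) => H; first by right.
left; apply: memU; first by have := ltn_ord i; lia.
right; rewrite -leNgt in H; have := pabs i.+1; have := ltn_ord i; split; lia.
Qed.


Definition Wt {R : realType} n (beta : R) (om : site -> R) (st : steps n) : R :=
  expR (beta * \sum_(i < n) om ((i.+1)%:Z, pos n st i.+1)).

Lemma Zpart_W {R : realType} n (beta : R) om (Ap : pred (steps n)) :
  Zpart n beta om Ap = ((2 : R) ^+ n)^-1 * \sum_(st | Ap st) Wt n beta om st.
Proof. by []. Qed.

Lemma Zpart_ge0 {R : realType} n (beta : R) om Ap : 0 <= Zpart n beta om Ap.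
Proof.
rewrite Zpart_W mulr_ge0 ?invr_ge0 ?exprn_ge0 //.
by apply: sumr_ge0 => st _; rewrite /Wt ltW ?expR_gt0.
Qed.

Lemma Zfull_gt0 {R : realType} n (beta : R) om : 0 < Zfull n beta om.
Proof.
rewrite /Zfull Zpart_W mulr_gt0 ?invr_gt0 ?exprn_gt0 //.
rewrite (bigD1 ([ffun=> true] : steps n)) //=.
apply: ltr_wpDr; last by rewrite /Wt expR_gt0.
by apply: sumr_ge0 => st _; rewrite /Wt ltW ?expR_gt0.
Qed.

Lemma wsplit {R : realType} n (beta k : R) om (st : steps n) :
  Wt n beta om st = Wt n beta (trunc k om) st * expR (beta * Dst n k om st).
Proof.
rewrite /Wt -expRD -mulrDr -big_split /=; congr (expR (beta * _)).
by apply: eq_bigr => i _; rewrite /trunc /dd /site_of; case: leP => H; rewrite ?addr0 ?add0r.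
Qed.

Lemma det_bound {R : realType} n (beta k : R) l (h : nat -> nat) om :
  (1 <= n)%N -> 0 < beta -> 0 < k -> (1 <= l)%N -> h 0%N = 0%N ->
  (forall j, (j < l)%N -> (h j < h j.+1)%N) ->
  (h l.-1 < n)%N -> (n <= h l)%N ->
  (forall v, v \in Ulist n (h 1%N) -> om v <= k) ->
  ln (Zfull n beta om) - ln (Zfull n beta (trunc k om)) <=
  \sum_(2 <= j < l.+1) expR (beta * Mbox n (h j) k om) *
     polymer n beta (trunc k om) (outBox n (h j.-1)).
Proof.
move=> hn hb hk hl h0 hinc hlm hnl hU.
set tom := trunc k om.
set S := \sum_(2 <= j < l.+1) _.
have Zt0 := Zfull_gt0 n beta tom.
have S0 : 0 <= S.
  apply: sumr_ge0 => j _; apply: mulr_ge0; first exact/ltW/expR_gt0.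
  by rewrite /polymer; apply: divr_ge0; [exact: Zpart_ge0 | exact/ltW/Zfull_gt0].
have S1 : 0 < 1 + S by apply: (lt_le_trans ltr01); rewrite lerDl.
have key : Zfull n beta om <= Zfull n beta tom * (1 + S).
  rewrite mulrDr mulr1 /S mulr_sumr.
  have -> : \sum_(2 <= j < l.+1) Zfull n beta tom *
       (expR (beta * Mbox n (h j) k om) * polymer n beta tom (outBox n (h j.-1))) =
     \sum_(2 <= j < l.+1) expR (beta * Mbox n (h j) k om) * Zpart n beta tom (outBox n (h j.-1)).
    apply: eq_bigr => j _; rewrite mulrCA; congr (_ * _).
    by rewrite /polymer mulrC divfK // gt_eqF.
  rewrite /Zfull !Zpart_W.
  have -> : \sum_(2 <= j < l.+1) expR (beta * Mbox n (h j) k om) *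
      (((2 : R) ^+ n)^-1 * \sum_(st | outBox n (h j.-1) st) Wt n beta tom st) =
     ((2 : R) ^+ n)^-1 * \sum_(2 <= j < l.+1) expR (beta * Mbox n (h j) k om) *
      \sum_(st | outBox n (h j.-1) st) Wt n beta tom st.
    by rewrite mulr_sumr; apply: eq_bigr => j _; rewrite mulrCA.
  rewrite -mulrDr ler_pM2l ?invr_gt0 ?exprn_gt0 //.
  apply: (le_trans (y := \sum_(st | predT st) Wt n beta tom st *
     (1 + \sum_(2 <= j < l.+1) expR (beta * Mbox n (h j) k om) * (outBox n (h j.-1) st)%:R))).
    apply: ler_sum => st _; rewrite (wsplit _ _ k) ler_pM2l; last by rewrite /Wt expR_gt0.
    exact: (path_bound _ _ _ _ _ _ _ hn hb hk hl h0 hinc hlm hnl hU).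
  rewrite (eq_bigr (fun st => Wt n beta tom st + \sum_(2 <= j < l.+1)
     expR (beta * Mbox n (h j) k om) * (Wt n beta tom st * (outBox n (h j.-1) st)%:R))); last first.
    move=> st _; rewrite mulrDr mulr1 mulr_sumr; congr (_ + _).
    by apply: eq_bigr => j _; rewrite mulrCA.
  rewrite big_split /= lerD2l exchange_big /=; apply: ler_sum => j _.
  rewrite -mulr_sumr ler_pM2l ?expR_gt0 //.
  rewrite [X in _ <= X]big_mkcond /=; apply: ler_sum => st _.
  by case: (outBox _ _ st); rewrite ?mulr1 ?mulr0.
rewrite lerBlDl.
apply: (le_trans (y := ln (Zfull n beta tom * (1 + S)))).
  by rewrite ler_ln ?posrE ?Zfull_gt0 //; exact: mulr_gt0.
rewrite lnM ?posrE // lerD2l.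
by rewrite -ler_expR lnK ?posrE // expR_ge1Dx.
Qed.


Lemma meas_gt d (T : measurableType d) (R : realType) (F : T -> R) (A : R) :
  measurable_fun setT F -> measurable [set x | A < F x].
Proof.
move=> mF; rewrite -[X in measurable X]setTI.
rewrite (_ : [set x | A < F x] = F @^-1` `]A, +oo[); first exact: mF measurableT _ (measurable_itv _).
by apply/seteqP; split => x /=; rewrite in_itv /= andbT.
Qed.

Lemma bigU_meas d (T : measurableType d) (I : Type) (U : seq I) (F : I -> set T) :
  (forall i, measurable (F i)) -> measurable (\big[setU/set0]_(i <- U) F i).
Proof.
move=> mF; elim: U => [|i U IH]; rewrite ?big_nil ?big_cons //.
exact: measurableU.
Qed.

Lemma bigU_mem {T : Type} (I : eqType) (U : seq I) (F : I -> set T) i x :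
  i \in U -> F i x -> (\big[setU/set0]_(j <- U) F j) x.
Proof.
elim: U => // j U IH; rewrite inE big_cons => /orP [/eqP <- Fx|iU Fx]; first by left.
by right; apply: IH.
Qed.

Lemma bigU_bound d (T : measurableType d) (R : realType) (P : probability T R)
  (I : Type) (U : seq I) (F : I -> set T) (c : R) :
  (forall i, measurable (F i)) -> (forall i, P (F i) = c%:E) ->
  (P (\big[setU/set0]_(i <- U) F i) <= ((size U)%:R * c)%:E)%E.
Proof.
move=> mF PF; elim: U => [|i U IH]; first by rewrite big_nil measure0 mul0r.
rewrite big_cons; apply: (le_trans (measureU2 _ _ _)) => //; first exact: bigU_meas.
have hPi : (P (F i) <= c%:E)%E by rewrite le_eqVlt; apply/orP; left; apply/eqP; exact: PF i.
apply: (le_trans (leeD hPi IH)).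
by rewrite -EFinD lee_fin /= -addn1 natrD mulrDl mul1r addrC.
Qed.


Theorem lemma2p2 (d : measure_display) (T : measurableType d) (R : realType)
  (P : probability T R) (omega : site -> {RV P >-> R})
  (n : nat) (beta k : R) (l : nat) (h : nat -> nat) (A : R) :
  mutually_independent P site omega ->
  identically_distributed P site omega ->
  (1 <= n)%N -> 0 < beta -> 0 < k ->
  (1 <= l)%N -> h 0%N = 0%N ->
  (forall j, (j < l)%N -> (h j < h j.+1)%N) ->
  (h l.-1 < n)%N -> (n <= h l)%N ->
  0 < A ->
  (P [set x | (ln (Zfull n beta (fun v => omega v x))
              - ln (Zfull n beta (trunc k (fun v => omega v x))) > A)%R]
   <= ((box_card n (h 1%N))%:R)%:E * P [set x | (omega (0, 0) x > k)%R]
      + P [set x | (\sum_(2 <= j < l.+1)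
              expR (beta * Mbox n (h j) k (fun v => omega v x))
              * polymer n beta (trunc k (fun v => omega v x))
                  (outBox n (h j.-1)) > A)%R])%E.
Proof.
move=> _ hid hn hb hk hl h0 hinc hlm hnl hA.
have h1pos : (1 <= h 1%N)%N by have := hinc 0%N hl; rewrite h0.
have mom v : measurable_fun setT (omega v) := measurable_funP (omega v).
have mtr v : measurable_fun setT (fun x => trunc k (fun v => omega v x) v).
  rewrite /trunc; apply: measurable_fun_ifT.
  - by apply: measurable_fun_ler => //; exact: measurable_cst.
  - exact: mom.
  - exact: measurable_cst.
have mZp : forall (om : site -> T -> R) Ap, (forall v, measurable_fun setT (om v)) ->
    measurable_fun setT (fun x => Zpart n beta (fun v => om v x) Ap).
  move=> om Ap hom; rewrite /Zpart.
  apply: measurable_funM; first exact: measurable_cst.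
  have -> : (fun x => \sum_(st | Ap st) expR (beta * \sum_(i < n) om ((i.+1)%:Z, pos n st i.+1) x))
     = (fun x => \sum_(st <- index_enum (steps n))
          (if Ap st then expR (beta * \sum_(i < n) om ((i.+1)%:Z, pos n st i.+1) x) else 0)).
    by apply: funext => x; rewrite big_mkcond.
  apply: measurable_sum => st; case: (Ap st); last exact: measurable_cst.
  apply: measurableT_comp; first exact: measurable_expR.
  apply: measurable_funM; first exact: measurable_cst.
  by apply: measurable_sum => i; exact: hom.
have mZf : forall (om : site -> T -> R), (forall v, measurable_fun setT (om v)) ->
    measurable_fun setT (fun x => Zfull n beta (fun v => om v x)).
  by move=> om hom; exact: mZp.
have mpol : forall (om : site -> T -> R) Ap, (forall v, measurable_fun setT (om v)) ->
    measurable_fun setT (fun x => polymer n beta (fun v => om v x) Ap).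
  move=> om Ap hom.
  have -> : (fun x => polymer n beta (fun v => om v x) Ap) =
    (fun x => Zpart n beta (fun v => om v x) Ap * expR (- ln (Zfull n beta (fun v => om v x)))).
    by apply: funext => x; rewrite /polymer expRN lnK ?posrE ?Zfull_gt0.
  apply: measurable_funM; first exact: mZp.
  apply: measurableT_comp; first exact: measurable_expR.
  apply: measurable_funN; apply: measurableT_comp; first exact: measurable_ln.
  exact: mZf.
have mMbox j : measurable_fun setT (fun x => Mbox n (h j) k (fun v => omega v x)).
  rewrite /Mbox; apply: measurable_sum => v; apply: measurable_fun_ifT.
  - by apply: measurable_fun_ltr => //; exact: measurable_cst.
  - exact: mom.
  - exact: measurable_cst.
set Ev := [set x | _ > A].
set Sset := [set x | _ > A].
have mEv : measurable Ev.
  apply: meas_gt; apply: measurable_funB; apply: measurableT_comp.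
  - exact: measurable_ln.
  - exact: (mZf (fun v x => omega v x)).
  - exact: measurable_ln.
  - exact: (mZf (fun v x => trunc k (fun v => omega v x) v)).
have mS : measurable Sset.
  apply: meas_gt; apply: measurable_sum => j; apply: measurable_funM.
  - apply: measurableT_comp; first exact: measurable_expR.
    by apply: measurable_funM; [exact: measurable_cst | exact: mMbox].
  - exact: (mpol (fun v x => trunc k (fun v => omega v x) v)).
set U := Ulist n (h 1%N).
set Bad := \big[setU/set0]_(v <- U) [set x | k < omega v x].
have mF v : measurable [set x | k < omega v x] by exact: meas_gt.
have mBad : measurable Bad by exact: bigU_meas.
set c := fine (P [set x | k < omega (0, 0) x]).
have hc : P [set x | k < omega (0, 0) x] = c%:E by rewrite fineK // fin_num_measure.
have hid' v : P [set x | k < omega v x] = c%:E.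
  rewrite -hc.
  have e w : [set x | k < omega w x] = omega w @^-1` `]k, +oo[.
    by apply/seteqP; split => x /=; rewrite in_itv /= andbT.
  by rewrite !e; exact: hid (measurable_itv _).
have hsub : Ev `<=` Bad `|` Sset.
  move=> x /= Hx.
  case: (boolP (all (fun v => omega v x <= k) U)) => [/allP Hall | /allPn [v vU Hv]].
    right => /=; apply: (lt_le_trans Hx).
    exact: (det_bound _ _ _ _ _ (fun v => omega v x) hn hb hk hl h0 hinc hlm hnl Hall).
  by left; apply: (bigU_mem _ _ _ _ _ vU); rewrite /= ltNge.
apply: (le_trans (le_measure _ _ _ hsub)).
- by rewrite inE.
- by rewrite inE; exact: measurableU.
apply: (le_trans (measureU2 _ _ _)) => //.
apply: leeD2r.
apply: (le_trans (bigU_bound _ _ _ _ _ _ _ _ mF hid')).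
rewrite hc -EFinM lee_fin; apply: ler_wpM2r.
  by rewrite fine_ge0 // measure_ge0.
by rewrite ler_nat; exact: size_U.
Qed.
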